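(* Let $g\geq 0$ and $n\geq 1$ be integers, and let $\mathcal{A}_1,\dots,\mathcal{A}_{N-1},\mathcal{A}_N=\mathcal{A}$ be weight data in $\mathcal{D}_{g,n}$, each lying in a chamber, with chambers $Ch_{\mathcal{A}_p}\ni\mathcal{A}_p$, such that the chambers up to symmetry form an ordered sequence $$[Ch_{\mathcal{A}_1}]\leq [Ch_{\mathcal{A}_2}]\leq \dots\leq [Ch_{\mathcal{A}_{N-1}}]\leq [Ch_{\mathcal{A}}].$$ Then this sequence induces a filtration by embeddings $$M^{trop}_{g,\mathcal{A}_1}\hookrightarrow M^{trop}_{g,\mathcal{A}_2}\hookrightarrow \dots\hookrightarrow M^{trop}_{g,\mathcal{A}_{N-1}}\hookrightarrow M^{trop}_{g,\mathcal{A}}.$$ The same holds with $M^{trop}_{g,\mathcal{A}_p}$ replaced throughout by the moduli space $\overline{M}^{trop}_{g,\mathcal{A}_p}$ of extended $(g,\mathcal{A}_p)$-stable tropical curves, or by the moduli space $\Delta_{g,\mathcal{A}_p}$ of $(g,\mathcal{A}_p)$-stable tropical curves of volume $1$.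
   Context: Weight data: for integers $g\ge0,n\ge1$, a weight datum is $\mathcal{A}=(a_1,\dots,a_n)$ with $a_i\in\mathbb{Q}\cap(0,1]$ and $2g-2+\sum_i a_i>0$; $\mathcal{D}_{g,n}\subset\mathbb{R}^n$ is the set of weight data. Write $\mathcal{A}\le\mathcal{B}$ if $a_i\le b_i$ for all $i$. Walls and chambers: for $S\subseteq\{1,\dots,n\}$ with $2\le|S|\le n$ if $g\ge1$ (resp. $2\le |S|\le n-2$ if $g=0$), the wall $w_S$ is the locus $\sum_{i\in S}a_i=1$ in $\mathcal{D}_{g,n}$; $W_f$ is the set of walls. The chambers (fine chamber decomposition) are the connected components of $\mathcal{D}_{g,n}\setminus\bigcup_{w\in W_f}w$; a chamber is determined by specifying, for each such $S$, whether $\sum_{i\in S}a_i<1$ or $>1$. $\mathbf{K}$ denotes the set of chambers. Partial order on $\mathbf{K}$: $Ch_1\le Ch_2$ iff for every such $S$, whenever $\sum_{i\in S}a_i>1$ for $\mathcal{A}\in Ch_1$ then $\sum_{i\in S}b_i>1$ for $\mathcal{B}\in Ch_2$ (i.e. all defining inequalities that differ have $<1$ on $Ch_1$ and $>1$ on $Ch_2$). The symmetric group $S_n$ acts on $\mathcal{D}_{g,n}$ by permuting coordinates, hence on $\mathbf{K}$; the orbit of $Ch$ is the chamber up to symmetry $[Ch]$, and $[Ch_1]\le[Ch_2]$ iff there are $Ch_1'\in[Ch_1]$, $Ch_2'\in[Ch_2]$ with $Ch_1'\le Ch_2'$. Stable graphs: a $(g,\mathcal{A})$-stable graph is a finite connected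 graph $G$ (loops and multiple edges allowed) with a vertex weight $w:V(G)\to\mathbb{Z}_{\ge0}$ and $n$ legs labelled $1,\dots,n$ attached to vertices via $m:\{1,\dots,n\}\to V(G)$, such that $b_1(G)+\sum_v w(v)=g$ and for each vertex $v$, $2w(v)-2+|v|_E+|v|_{\mathcal{A}}>0$, where $|v|_E$ is the number of edge half-edges at $v$ (loops counted twice) and $|v|_{\mathcal{A}}=\sum_{m(i)=v}a_i$. Tropical moduli spaces: a $(g,\mathcal{A})$-stable tropical curve is such a graph with edge lengths $\ell:E(G)\to\mathbb{R}_{>0}$; $M^{trop}_{g,\mathcal{A}}$ is the set of isomorphism classes, topologized as the colimit of the cones $\mathbb{R}_{\ge0}^{E(G)}$ over all $(g,\mathcal{A})$-stable graphs glued along weighted edge contractions (an edge of length $0$ is contracted) and isomorphisms. $\overline{M}^{trop}_{g,\mathcal{A}}$ is defined analogously allowing lengths in $\mathbb{R}_{>0}\cup\{\infty\}$, and $\Delta_{g,\mathcal{A}}\subset M^{trop}_{g,\mathcal{A}}$ is the subspace of curves with total edge length $1$. *)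

(* Defs.v *)
From HB Require Import structures.
From mathcomp Require Import all_boot all_order all_algebra all_fingroup.
From mathcomp Require Import all_classical all_reals.
From mathcomp Require Import topology normedtype ereal.
Set Implicit Arguments. Unset Strict Implicit. Unset Printing Implicit Defensive.
Import Order.TTheory GRing.Theory Num.Theory.
Import numFieldNormedType.Exports.
Local Open Scope classical_set_scope.
Local Open Scope ring_scope.

Definition wsum (n : nat) (A : 'I_n -> rat) (S : {set 'I_n}) : rat :=
  \sum_(i in S) A i.

Definition weight_datum (g n : nat) (A : 'I_n -> rat) : Prop :=
  (forall i, 0 < A i /\ A i <= 1) /\
  0 < (2 * g)%:R - 2 + \sum_(i < n) A i.

Definition wall_index (g n : nat) (S : {set 'I_n}) : bool :=
  if (1 <= g)%N then ((2 <= #|S|) && (#|S| <= n))%N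
  else ((2 <= #|S|) && (#|S| <= n - 2))%N.

Definition in_chamber (g n : nat) (A : 'I_n -> rat) : Prop :=
  forall S, wall_index g S -> wsum A S != 1.

(* Ch_A <= Ch_B (chambers represented by points of them) *)
Definition chamber_le (g n : nat) (A B : 'I_n -> rat) : Prop :=
  forall S, wall_index g S -> 1 < wsum A S -> 1 < wsum B S.

Definition permute_wt (n : nat) (s : 'S_n) (A : 'I_n -> rat) : 'I_n -> rat :=
  fun i => A (s i).

Definition sym_chamber_le (g n : nat) (A B : 'I_n -> rat) : Prop :=
  exists s1 s2 : 'S_n, chamber_le g (permute_wt s1 A) (permute_wt s2 B).

(* Edge e has (unordered) endpoints (ends e).1, (ends e).2; loops allowed,
   multiple edges allowed. *)
Record lgraph (n : nat) := LGraph {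
  nv : nat;
  ne : nat;
  ends : 'I_ne -> 'I_nv * 'I_nv;
  wt : 'I_nv -> nat;
  leg : 'I_n -> 'I_nv }.
Arguments nv {n} l.
Arguments ne {n} l.
Arguments ends {n} l _.
Arguments wt {n} l _.
Arguments leg {n} l _.

Definition adj n (G : lgraph n) : rel 'I_(nv G) :=
  fun u v => [exists e, (ends G e == (u, v)) || (ends G e == (v, u))].

Definition connected_graph n (G : lgraph n) : Prop :=
  (0 < nv G)%N /\ forall u v, connect (@adj n G) u v.

(* |v|_E : half-edges at v, loops counted twice *)
Definition valE n (G : lgraph n) (v : 'I_(nv G)) : nat :=
  (#|[set e | (ends G e).1 == v]| + #|[set e | (ends G e).2 == v]|)%N.

Definition valA n (A : 'I_n -> rat) (G : lgraph n) (v : 'I_(nv G)) : rat :=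
  \sum_(i | leg G i == v) A i.

(* (g,A)-stable graph.  For a connected graph b_1(G) = |E| - |V| + 1,
   so b_1(G) + sum_v w(v) = g is written |E| + 1 + sum_v w(v) = g + |V|. *)
Definition stable_graph (g n : nat) (A : 'I_n -> rat) (G : lgraph n) : Prop :=
  connected_graph G /\
  (ne G + 1 + \sum_(v < nv G) wt G v = g + nv G)%N /\
  (forall v, 0 < (2 * wt G v + valE v)%:R - 2 + valA A v).

Definition relabel n (s : 'S_n) (G : lgraph n) : lgraph n :=
  @LGraph n (nv G) (ne G) (ends G) (wt G) (fun i => leg G (s i)).

(* a graph with edge lengths in L (length z = "zero", to be contracted) *)

Record trep (L : Type) (n : nat) := TRep {
  tgr : lgraph n;
  tlen : 'I_(ne tgr) -> L }.
Arguments tgr {L n} t.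
Arguments tlen {L n} t _.
Arguments TRep {L n} tgr tlen.

Definition trelabel (L : Type) n (s : 'S_n) (x : trep L n) : trep L n :=
  @TRep L n (relabel s (tgr x)) (tlen x).

Section Contraction.
Variables (L : eqType) (z : L) (n : nat).

Definition zadj (x : trep L n) : rel 'I_(nv (tgr x)) :=
  fun u v => [exists e, (tlen x e == z) &&
     ((ends (tgr x) e == (u, v)) || (ends (tgr x) e == (v, u)))].

(* u and v lie in the same connected component of the zero-length subgraph,
   i.e. get identified by the contraction of the zero-length edges *)
Definition zcls (x : trep L n) (u v : 'I_(nv (tgr x))) : bool :=
  connect (@zadj x) u v.

(* weight of the contracted vertex [u]:
   sum of weights in the component + b_1 of the component *)
Definition cwt (x : trep L n) (u : 'I_(nv (tgr x))) : int :=
  ((\sum_(v | zcls u v) wt (tgr x) v)%N%:Z +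
   #|[set e | (tlen x e == z) && zcls u (ends (tgr x) e).1]|%:Z + 1
   - #|[set v | zcls u v]|%:Z)%R.

(* x ~ y : the tropical curves obtained from x and y by contracting all
   edges of length z are isomorphic.  phi induces the bijection on the
   vertices of the contracted graphs (components), psi the bijection on
   the remaining (non-contracted) edges. *)
Definition trop_equiv (x y : trep L n) : Prop :=
  exists (phi : 'I_(nv (tgr x)) -> 'I_(nv (tgr y)))
         (psi : 'I_(ne (tgr x)) -> 'I_(ne (tgr y))),
    (forall u v, zcls u v = zcls (phi u) (phi v)) /\
    (forall v', exists u, zcls (phi u) v') /\
    (forall e, tlen x e != z -> tlen y (psi e) = tlen x e) /\
    (forall e1 e2, tlen x e1 != z -> tlen x e2 != z -> psi e1 = psi e2 -> e1 = e2) /\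
    (forall e', tlen y e' != z -> exists2 e, tlen x e != z & psi e = e') /\
    (forall e, tlen x e != z ->
       (zcls (phi (ends (tgr x) e).1) (ends (tgr y) (psi e)).1 &&
        zcls (phi (ends (tgr x) e).2) (ends (tgr y) (psi e)).2) ||
       (zcls (phi (ends (tgr x) e).1) (ends (tgr y) (psi e)).2 &&
        zcls (phi (ends (tgr x) e).2) (ends (tgr y) (psi e)).1)) /\
    (forall i, zcls (phi (leg (tgr x) i)) (leg (tgr y) i)) /\
    (forall u, cwt u = cwt (phi u)).

End Contraction.

(* Moduli spaces as quotient spaces: a space is given by its set of    *)
(* representatives, the identification relation, and its open sets    *)
(* (represented by saturated sets of representatives).                 *)

Record qspace (X : Type) := QSpace {
  qpts : set X;
  qeq : X -> X -> Prop;
  qopen : set X -> Prop }.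

Section Moduli.
Variables (T : topologicalType) (z : T) (dom : set T).

(* open subsets of the cone dom^k (product topology, finite product) *)
Definition cone_open (k : nat) (C : set ('I_k -> T)) : Prop :=
  forall l, (forall e, dom (l e)) -> C l ->
    exists N : 'I_k -> set T, (forall e, nbhs (l e) (N e)) /\
      forall l', (forall e, dom (l' e)) -> (forall e, N e (l' e)) -> C l'.

Definition mpts (g n : nat) (A : 'I_n -> rat) : set (trep T n) :=
  [set x | stable_graph g A (tgr x) /\ forall e, dom (tlen x e)].

Definition saturated (n : nat) (P : set (trep T n)) (U : set (trep T n)) :=
  forall x y, P x -> P y -> trop_equiv z x y -> U x -> U y.

(* colimit topology: U open iff its pullback to every cone is open *)
Definition mopen (g n : nat) (A : 'I_n -> rat) (U : set (trep T n)) : Prop :=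
  U `<=` mpts g A /\ saturated (mpts g A) U /\
  forall G : lgraph n, stable_graph g A G ->
    cone_open (fun l : 'I_(ne G) -> T => U (TRep G l)).

Definition moduli (g n : nat) (A : 'I_n -> rat) : qspace (trep T n) :=
  QSpace (mpts g A) (@trop_equiv T z n) (mopen g A).

End Moduli.

Definition Mtrop (R : realType) (g n : nat) (A : 'I_n -> rat) :=
  @moduli R (0 : R) [set x : R | 0 <= x] g n A.

Definition Mtrop_bar (R : realType) (g n : nat) (A : 'I_n -> rat) :=
  @moduli (\bar R) (0%E : \bar R) [set x : \bar R | (0 <= x)%E] g n A.

Definition total_length (R : realType) n (x : trep R n) : R :=
  \sum_(e < ne (tgr x)) tlen x e.

Definition Delta_trop (R : realType) (g n : nat) (A : 'I_n -> rat) :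
    qspace (trep R n) :=
  QSpace [set x | qpts (Mtrop R g A) x /\ total_length x = 1]
         (@trop_equiv R 0 n)
         (fun U => exists V, qopen (Mtrop R g A) V /\
              U = V `&` [set x | total_length x = 1]).

(* f (acting on representatives) induces a topological embedding of the
   quotient spaces: well defined, injective, continuous, and a
   homeomorphism onto its image (initial topology). *)
Definition qembedding (X Y : Type) (SX : qspace X) (SY : qspace Y)
    (f : X -> Y) : Prop :=
  (forall x, qpts SX x -> qpts SY (f x)) /\
  (forall x y, qpts SX x -> qpts SX y -> qeq SX x y -> qeq SY (f x) (f y)) /\
  (forall x y, qpts SX x -> qpts SX y -> qeq SY (f x) (f y) -> qeq SX x y) /\
  (forall V, qopen SY V -> qopen SX [set x | qpts SX x /\ V (f x)]) /\
  (forall U, qopen SX U -> exists V, qopen SY V /\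
      forall x, qpts SX x -> (U x <-> V (f x))).

(* Main.v *)
Require Import Defs.
From HB Require Import structures.
From mathcomp Require Import all_boot all_order all_algebra all_fingroup.
From mathcomp Require Import all_classical all_reals.
From mathcomp Require Import topology normedtype ereal.
From mathcomp Require Import zify ring lra.
Import Order.TTheory GRing.Theory Num.Theory.
Local Open Scope ring_scope.
Set Implicit Arguments. Unset Strict Implicit. Unset Printing Implicit Defensive.

Section Comb.
Variables (L : eqType) (z : L) (n : nat).
Implicit Types x y : trep L n.

Lemma zadj_sym x : symmetric (@zadj L z n x).
Proof.
move=> u v; rewrite /zadj; apply/existsP/existsP => -[e He]; exists e;
  by rewrite orbC.
Qed.

Lemma zclsC x (u v : 'I_(nv (tgr x))) : zcls z u v = zcls z v u.
Proof. by have := sym_connect_sym (@zadj_sym x) u v. Qed.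

Lemma zclsT x (u v w : 'I_(nv (tgr x))) : zcls z u v -> zcls z v w -> zcls z u w.
Proof. exact: connect_trans. Qed.

Lemma zcls0 x (u : 'I_(nv (tgr x))) : zcls z u u.
Proof. exact: connect0. Qed.

Lemma zcls_congr x (a a' b b' : 'I_(nv (tgr x))) :
  zcls z a a' -> zcls z b b' -> zcls z a b = zcls z a' b'.
Proof.
move=> h1 h2; apply/idP/idP => h.
  by apply: zclsT (h2); apply: zclsT h; rewrite zclsC.
by apply: zclsT h1 _; apply: zclsT h _; rewrite zclsC.
Qed.

Lemma zphi x y (phi : 'I_(nv (tgr x)) -> 'I_(nv (tgr y))) :
  (forall u v, zcls z u v = zcls z (phi u) (phi v)) ->
  forall u v, zcls z u v -> zcls z (phi u) (phi v).
Proof. by move=> H u v; rewrite H. Qed.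

Lemma cwt_class x (u v : 'I_(nv (tgr x))) : zcls z u v -> cwt z u = cwt z v.
Proof.
move=> huv; rewrite /cwt.
have E : forall w, zcls z u w = zcls z v w.
  by move=> t; apply: zcls_congr => //; apply: zcls0.
rewrite (eq_bigl _ _ E).
congr (_ + _ + _ - _); congr (Posz _); apply: eq_card => t; rewrite /in_set !unfold_in /= E //.
Qed.

Lemma trop_refl x : trop_equiv z x x.
Proof.
exists id, id; do !split => //.
- by move=> v'; exists v'; apply: zcls0.
- by move=> e' He'; exists e'.
- by move=> e _; rewrite !zcls0.
- by move=> i; apply: zcls0.
Qed.

Lemma trop_relabel (s : 'S_n) x y :
  trop_equiv z (trelabel s x) (trelabel s y) <-> trop_equiv z x y.
Proof.
split.
- case=> phi [psi [A [B [C [D [E [F [G H]]]]]]]].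
  exists phi, psi; do !split => //.
  by move=> i; have := G (s^-1 i)%g; rewrite /= permKV.
- case=> phi [psi [A [B [C [D [E [F [G H]]]]]]]].
  exists phi, psi; do !split => //.
  by move=> i; exact: (G (s i)).
Qed.

Ltac solve_zc :=
  match goal with |- is_true (zcls _ ?a ?b) =>
    match goal with H : is_true (zcls _ a ?m), K : is_true (zcls _ ?m b) |- _ =>
      exact: (zclsT H K) end end.

Lemma trop_trans x y w : trop_equiv z x y -> trop_equiv z y w -> trop_equiv z x w.
Proof.
case=> phi1 [psi1 [A1 [B1 [C1 [D1 [E1 [F1 [G1 H1]]]]]]]].
case=> phi2 [psi2 [A2 [B2 [C2 [D2 [E2 [F2 [G2 H2]]]]]]]].
exists (phi2 \o phi1), (psi2 \o psi1); split; [|split; [|split; [|split; [|split; [|split; [|split]]]]]].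
- by move=> u v; rewrite /= A1 A2.
- move=> v'; have [v Hv] := B2 v'; have [u Hu] := B1 v; exists u.
  by apply: zclsT Hv; apply: zphi Hu.
- move=> e He /=; have Hb : tlen y (psi1 e) != z by rewrite C1.
  by rewrite C2 // C1.
- move=> e1 e2 He1 He2 /= Heq.
  have Hb1 : tlen y (psi1 e1) != z by rewrite C1.
  have Hb2 : tlen y (psi1 e2) != z by rewrite C1.
  by apply: D1 => //; apply: D2.
- move=> e' He'; have [e2 He2 <-] := E2 e' He'; have [e1 He1 <-] := E1 e2 He2.
  by exists e1.
- move=> e He /=; have Hb : tlen y (psi1 e) != z by rewrite C1.
  move: (F1 e He) (F2 (psi1 e) Hb) => /orP[] /andP[/(zphi A2) h1 /(zphi A2) h2]
    /orP[] /andP[k1 k2];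
  [apply/orP; left | apply/orP; right | apply/orP; right | apply/orP; left];
  apply/andP; split; solve_zc.
- by move=> i /=; apply: zclsT (G2 i); apply: zphi (G1 i).
- by move=> u /=; rewrite H1 H2.
Qed.

Lemma trop_sym x y : (0 < ne (tgr x))%N -> trop_equiv z x y -> trop_equiv z y x.
Proof.
move=> hne; case=> phi [psi [A [B [C [D [E [F [G H]]]]]]]].
have [phi' Hphi'] := choice B.
have Bpsi : forall h : 'I_(ne (tgr y)), exists e : 'I_(ne (tgr x)),
    tlen y h != z -> tlen x e != z /\ psi e = h.
  move=> h; case: (boolP (tlen y h != z)) => hh.
    by have [e He1 He2] := E h hh; exists e.
  by exists (Ordinal hne).
have [psi' Hpsi'] := choice Bpsi.
have Pinv : forall u v, zcls z u v = zcls z (phi' u) (phi' v).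
  by move=> u v; rewrite A; apply: zcls_congr; rewrite zclsC.
exists phi', psi'; split; [|split; [|split; [|split; [|split; [|split; [|split]]]]]].
- exact: Pinv.
- move=> v'; exists (phi v'); rewrite A; exact: Hphi'.
- by move=> h hh; have [h1 h2] := Hpsi' h hh; rewrite -{2}h2 C.
- move=> h1 h2 hh1 hh2 Heq.
  have [_ e1] := Hpsi' h1 hh1; have [_ e2] := Hpsi' h2 hh2.
  by rewrite -e1 -e2 Heq.
- move=> e He; exists (psi e); first by rewrite C.
  have hb : tlen y (psi e) != z by rewrite C.
  have [h1 h2] := Hpsi' (psi e) hb.
  by apply: D.
- move=> h hh; have [h1 h2] := Hpsi' h hh.
  set e := psi' h in h1 h2 *.
  have K1 := Hphi' (ends (tgr y) h).1.
  have K2 := Hphi' (ends (tgr y) h).2.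
  move: (F e h1); rewrite h2 => /orP[] /andP[k1 k2].
  + apply/orP; left; apply/andP; split; rewrite A.
    * by apply: zclsT K1 _; rewrite zclsC.
    * by apply: zclsT K2 _; rewrite zclsC.
  + apply/orP; right; apply/andP; split; rewrite A.
    * by apply: zclsT K1 _; rewrite zclsC.
    * by apply: zclsT K2 _; rewrite zclsC.
- move=> i; rewrite A; apply: zclsT (Hphi' _) _; rewrite zclsC; exact: G.
- by move=> v; rewrite H; apply: cwt_class; rewrite zclsC; apply: Hphi'.
Qed.


Lemma conn_ind (T : finType) (e : rel T) (R : T -> T -> Prop) :
  (forall u, R u u) -> (forall u v w, R u v -> R v w -> R u w) ->
  (forall u v, e u v -> R u v) -> forall u v, connect e u v -> R u v.
Proof.
move=> R0 RT Re u v /connectP [p]; elim: p u => [|w p IH] u /=.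
  by move=> _ ->.
by case/andP => euw pw Hv; apply: RT (Re _ _ euw) (IH _ pw Hv).
Qed.

Lemma zmono x (a' : 'I_(ne (tgr x)) -> L) :
  (forall e, tlen x e = z -> a' e = z) ->
  forall u v, zcls z (x:=x) u v -> zcls z (x:=TRep (tgr x) a') u v.
Proof.
move=> H; apply: connect_sub => u v /existsP [e /andP [He Hends]].
apply: connect1; apply/existsP; exists e; rewrite /= Hends andbT.
by apply/eqP; apply: H; apply/eqP.
Qed.

Lemma card_cls (T : finType) (P : pred T) :
  #|[set x | P x]%classic| = #|[set x | P x]%SET|.
Proof. apply: eq_card => x; rewrite inE /in_set unfold_in /=; exact: asboolb. Qed.

Lemma sumPosz (I : finType) (P : pred I) (F : I -> nat) :
  Posz (\sum_(i | P i) F i)%N = \sum_(i | P i) Posz (F i).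
Proof.
by apply: (big_rec2 (fun a b => Posz a = b)) => // i a b _ <-; rewrite PoszD.
Qed.

Lemma card_part (I J : finType) (P : pred I) (p : I -> J) (C : pred J) :
  (\sum_(j | C j) #|[set i | P i && (p i == j)]|)%N = #|[set i | P i && C (p i)]|.
Proof.
rewrite -[RHS]sum1_card (partition_big p C) => [|i]; last by rewrite inE => /andP[].
apply: eq_bigr => j Cj; rewrite -sum1_card; apply: eq_bigl => i; rewrite !inE.
by case: (p i =P j) => [->|]; rewrite ?Cj ?andbT ?andbF.
Qed.

Definition cv x (v : 'I_(nv (tgr x))) : int :=
  (wt (tgr x) v)%:Z - 1 + #|[set e | (tlen x e == z) && ((ends (tgr x) e).1 == v)]%SET|%:Z.

Lemma cwtE x (u : 'I_(nv (tgr x))) : cwt z u = 1 + \sum_(v | zcls z u v) cv v.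
Proof.
rewrite /cwt !card_cls /cv.
have -> : \sum_(v | zcls z u v) ((wt (tgr x) v)%:Z - 1 +
     #|[set e | (tlen x e == z) && ((ends (tgr x) e).1 == v)]%SET|%:Z) =
   \sum_(v | zcls z u v) Posz (wt (tgr x) v) +
   \sum_(v | zcls z u v) Posz #|[set e | (tlen x e == z) && ((ends (tgr x) e).1 == v)]%SET|
   - \sum_(v | zcls z u v) Posz 1.
  by rewrite -big_split -sumrB; apply: eq_bigr => v _; ring.
rewrite -!sumPosz card_part sum1_card.
have -> : #|[pred v | zcls z u v]| = #|[set v | zcls z u v]%SET|.
  by apply: eq_card => v; rewrite !inE.
ring.
Qed.

Lemma zsym x : connect_sym (@zadj L z n x).
Proof. exact: sym_connect_sym (@zadj_sym x). Qed.

Lemma cwt_refine x (a' : 'I_(ne (tgr x)) -> L) :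
  (forall e, tlen x e = z -> a' e = z) -> forall u : 'I_(nv (tgr x)),
  cwt z (x:=TRep (tgr x) a') u =
  1 + \sum_(r | zcls z (x:=TRep (tgr x) a') u r && (fingraph.root (@zadj L z n x) r == r))
        (cwt z (x:=x) r - 1)
    + Posz #|[set e | (a' e == z) && (tlen x e != z) &&
                zcls z (x:=TRep (tgr x) a') u (ends (tgr x) e).1]%SET|.
Proof.
move=> H u; set x' := TRep (tgr x) a'.
rewrite cwtE.
have Ecv : forall v : 'I_(nv (tgr x)), cv (x:=x') v = cv (x:=x) v +
   Posz #|[set e | (a' e == z) && (tlen x e != z) && ((ends (tgr x) e).1 == v)]%SET|.
  move=> v; rewrite /cv /= -[RHS]addrA; congr (_ + _).
  rewrite -PoszD; congr Posz.
  rewrite -(cardsID [set e | tlen x e == z]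
      [set e | (a' e == z) && ((ends (tgr x) e).1 == v)]); congr (_ + _)%N; congr #|pred_of_set _|.
    apply/setP => e; rewrite !inE; case: (boolP (tlen x e == z)) => he; rewrite ?andbT ?andbF //.
    by rewrite H ?eqxx //; apply/eqP.
  by apply/setP => e; rewrite !inE; case: (tlen x e == z); rewrite ?andbT ?andbF //= andbC.
rewrite (eq_bigr _ (fun v _ => Ecv v)) big_split /= -sumPosz card_part addrA.
congr (_ + _ + _).
rewrite (partition_big (fingraph.root (@zadj L z n x))
   (fun r => zcls z (x:=x') u r && (fingraph.root (@zadj L z n x) r == r))) /=; last first.
  move=> v Cv; rewrite root_root ?eqxx ?andbT; last exact: zsym.
  by apply: zclsT Cv _; apply: zmono => //; apply: connect_root.
apply: eq_bigr => r /andP [Cr Rr]; rewrite cwtE [1 + _]addrC addrK.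
apply: eq_bigl => v; apply/idP/idP.
  case/andP => _ /eqP hv; rewrite zclsC.
  apply: (introT (@fingraph.rootP _ (@zadj L z n x) (@zsym x) v r)).
  by rewrite hv (eqP Rr).
move=> hrv; apply/andP; split.
  by apply: zclsT Cr _; apply: zmono.
rewrite -(eqP Rr); apply/eqP.
apply: (elimT (@fingraph.rootP _ (@zadj L z n x) (@zsym x) v r)); by rewrite -/(zcls z v r) zclsC.
Qed.

Lemma trop_mono x y : (0 < ne (tgr x))%N -> trop_equiv z x y ->
  exists pre : 'I_(ne (tgr y)) -> 'I_(ne (tgr x)),
  forall a' : 'I_(ne (tgr x)) -> L, (forall e, tlen x e = z -> a' e = z) ->
  trop_equiv z (TRep (tgr x) a')
    (TRep (tgr y) (fun h => if tlen y h == z then z else a' (pre h))).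
Proof.
move=> hne [phi [psi [A [B [C [D [E [F [G H]]]]]]]]].
have Bpsi : forall h : 'I_(ne (tgr y)), exists e : 'I_(ne (tgr x)),
    tlen y h != z -> tlen x e != z /\ psi e = h.
  move=> h; case: (boolP (tlen y h != z)) => hh.
    by have [e He1 He2] := E h hh; exists e.
  by exists (Ordinal hne).
have [pre Hpre] := choice Bpsi.
have prepsi : forall e, tlen x e != z -> pre (psi e) = e.
  move=> e he; have hb : tlen y (psi e) != z by rewrite C.
  by have [h1 h2] := Hpre _ hb; apply: D.
exists pre => a' Ha.
set b' := fun h => if tlen y h == z then z else a' (pre h).
set x' := TRep (tgr x) a'; set y' := TRep (tgr y) b'.
have Hb : forall h, tlen y h = z -> b' h = z by move=> h hh; rewrite /b' hh eqxx.
have MX := zmono Ha; have MY := zmono Hb.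
have [phi' Hphi'] := choice B.
have Hnz : forall e, a' e != z -> tlen x e != z.
  by move=> e; apply: contra => /eqP he; apply/eqP; apply: Ha.
have b'psi : forall e, tlen x e != z -> b' (psi e) = a' e.
  by move=> e he; rewrite /b' C // (negbTE he) prepsi.
have ends_eq : forall (G0 : lgraph n) (e : 'I_(ne G0)), ends G0 e == ((ends G0 e).1, (ends G0 e).2).
  by move=> G0 e; rewrite -surjective_pairing.
have EdgeX : forall e, a' e = z ->
    zcls z (x:=y') (phi (ends (tgr x) e).1) (phi (ends (tgr x) e).2).
  move=> e ha; case: (boolP (tlen x e == z)) => he.
    apply: MY; apply: zphi A _ _ _; apply: connect1; apply/existsP; exists e.
    by rewrite he -!surjective_pairing eqxx.
  have hb : b' (psi e) = z by rewrite b'psi.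
  have K : zcls z (x:=y') (ends (tgr y) (psi e)).1 (ends (tgr y) (psi e)).2.
    by apply: connect1; apply/existsP; exists (psi e); rewrite /= hb eqxx -!surjective_pairing eqxx.
  move: (F e he) => /orP[] /andP[/MY k1 /MY k2].
    have k2' := k2; rewrite zclsC in k2'.
    exact: zclsT k1 (zclsT K k2').
  have k2' := k2; rewrite zclsC in k2'.
  have K' := K; rewrite zclsC in K'.
  exact: zclsT k1 (zclsT K' k2').
have EdgeY : forall h, b' h = z ->
    zcls z (x:=x') (phi' (ends (tgr y) h).1) (phi' (ends (tgr y) h).2).
  move=> h hb; case: (boolP (tlen y h == z)) => hh.
    have K0 : zcls z (x:=y) (ends (tgr y) h).1 (ends (tgr y) h).2.
      by apply: connect1; apply/existsP; exists h; rewrite hh -!surjective_pairing eqxx.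
    have K2 : zcls z (x:=y) (ends (tgr y) h).2 (phi (phi' (ends (tgr y) h).2)).
      by rewrite zclsC; apply: Hphi'.
    apply: MX; rewrite A; exact: zclsT (Hphi' _) (zclsT K0 K2).
  have [h1 h2] := Hpre h hh.
  have ha : a' (pre h) = z by move: hb; rewrite /b' (negbTE hh).
  have K : zcls z (x:=x') (ends (tgr x) (pre h)).1 (ends (tgr x) (pre h)).2.
    by apply: connect1; apply/existsP; exists (pre h); rewrite /= ha eqxx -!surjective_pairing eqxx.
  have L1 : forall p v, zcls z (x:=y) (phi v) p -> zcls z (x:=x') (phi' p) v.
    move=> p v hv; apply: MX; rewrite A; apply: zclsT (Hphi' p) _; by rewrite zclsC.
  move: (F (pre h) h1); rewrite h2 => /orP[] /andP[k1 k2].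
    by apply: zclsT (L1 _ _ k1) _; apply: zclsT K _; rewrite zclsC; apply: L1.
  apply: zclsT (L1 _ _ k2) _; rewrite zclsC in K; apply: zclsT K _.
  by rewrite zclsC; apply: L1.
have Ai : forall u v, zcls z (x:=x') u v = zcls z (x:=y') (phi u) (phi v).
  move=> u v; apply/idP/idP.
    move=> huv; apply: (@conn_ind _ (@zadj L z n x')
      (fun u v => zcls z (x:=y') (phi u) (phi v))) _ _ _ u v huv.
    - by move=> w; apply: zcls0.
    - by move=> ? ? ? h1 h2; apply: zclsT h1 h2.
    - move=> p q /existsP [e /andP [/eqP ha /orP [] /eqP He]].
        by have := EdgeX e ha; rewrite He.
      by have := EdgeX e ha; rewrite He zclsC.
  move=> huv.
  have K : forall p q, zcls z (x:=y') p q -> zcls z (x:=x') (phi' p) (phi' q).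
    move=> p q hpq; apply: (@conn_ind _ (@zadj L z n y')
      (fun p q => zcls z (x:=x') (phi' p) (phi' q))) _ _ _ p q hpq.
    - by move=> w; apply: zcls0.
    - by move=> ? ? ? h1 h2; apply: zclsT h1 h2.
    - move=> p0 q0 /existsP [h /andP [/eqP hb /orP [] /eqP He]].
        by have := EdgeY h hb; rewrite He.
      by have := EdgeY h hb; rewrite He zclsC.
  have R1 : forall w, zcls z (x:=x') w (phi' (phi w)).
    by move=> w; apply: MX; rewrite A zclsC; apply: Hphi'.
  apply: zclsT (R1 u) _; apply: zclsT (K _ _ huv) _; rewrite zclsC; exact: R1.
exists phi, psi; split; [|split; [|split; [|split; [|split; [|split; [|split]]]]]].
- exact: Ai.
- by move=> p; have [u hu] := B p; exists u; apply: MY.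
- by move=> e ha; rewrite /= b'psi // Hnz.
- by move=> e1 e2 ha1 ha2; apply: D; apply: Hnz.
- move=> h hb; have hh : tlen y h != z.
    by apply: contra hb => /eqP hh; rewrite /= Hb.
  have [h1 h2] := Hpre h hh; exists (pre h) => //.
  by move: hb; rewrite /= /b' (negbTE hh).
- move=> e ha; move: (F e (Hnz _ ha)) => /orP[] /andP [k1 k2]; apply/orP;
    [left|right]; apply/andP; split; exact: MY.
- by move=> i; apply: MY.
- move=> u; rewrite (cwt_refine Ha) (cwt_refine Hb).
  congr (1 + _ + Posz _).
  + pose h := fun r => fingraph.root (@zadj L z n y) (phi r).
    pose SX := [set r | zcls z (x:=x') u r && (fingraph.root (@zadj L z n x) r == r)].
    pose SY := [set p | zcls z (x:=y') (phi u) p && (fingraph.root (@zadj L z n y) p == p)].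
    transitivity (\sum_(r in SX) (cwt z (x:=x) r - 1)).
      by apply: eq_bigl => r; rewrite inE.
    transitivity (\sum_(p in SY) (cwt z (x:=y) p - 1)); last first.
      by apply: eq_bigl => r; rewrite inE.
    have injh : {in SX &, injective h}.
      move=> r1 r2; rewrite !inE => /andP [_ R1] /andP [_ R2] hc.
      have c1 : zcls z (x:=y) (phi r1) (phi r2).
        exact: (introT (@fingraph.rootP _ _ (@zsym y) (phi r1) (phi r2)) hc).
      rewrite -A in c1.
      rewrite -(eqP R1) -(eqP R2).
      exact: (elimT (@fingraph.rootP _ _ (@zsym x) r1 r2) c1).
    have ESY : SY = h @: SX.
      apply/setP => p; rewrite inE; apply/idP/imsetP.
        case/andP => Cp Rp; have [u0 hu0] := B p.
        set r0 := fingraph.root (@zadj L z n x) u0.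
        have c0 : zcls z (x:=y) (phi r0) p.
          apply: zclsT hu0; apply: zphi A _ _ _; rewrite zclsC; exact: connect_root.
        exists r0.
          rewrite inE /r0 root_root ?eqxx ?andbT; last exact: zsym.
          rewrite Ai; apply: zclsT Cp _; rewrite zclsC; exact: MY.
        rewrite /h -{1}(eqP Rp); symmetry.
        exact: (elimT (@fingraph.rootP _ _ (@zsym y) (phi r0) p) c0).
      case=> r; rewrite inE => /andP [Cr Rr] ->; apply/andP; split.
        rewrite Ai in Cr; apply: zclsT Cr _; apply: MY; exact: connect_root.
      by rewrite /h root_root ?eqxx //; exact: zsym.
    rewrite ESY big_imset //; apply: eq_bigr => r _.
    symmetry; rewrite H; congr (_ - 1); apply: cwt_class.
    rewrite zclsC; exact: connect_root.
  + have injp : {in [set e | (a' e == z) && (tlen x e != z) &&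
                zcls z (x:=x') u (ends (tgr x) e).1] &, injective psi}.
      move=> e1 e2; rewrite !inE => /andP [/andP [_ h1] _] /andP [/andP [_ h2] _].
      exact: D.
    rewrite -(card_in_imset injp); apply: eq_card => h.
    apply/imsetP/idP.
      case=> e; rewrite inE => /andP [/andP [/eqP ha hx] Ce] ->.
      rewrite inE /= b'psi // ha eqxx C // hx /=.
      rewrite Ai in Ce.
      move: (F e hx) => /orP[] /andP [/MY k1 /MY k2].
        exact: zclsT Ce k1.
      exact: zclsT Ce (zclsT (EdgeX e ha) k2).
    rewrite inE => /andP [/andP [hb hh] Ch]; have [h1 h2] := Hpre h hh.
    have ha : a' (pre h) == z by move: hb; rewrite /= /b' (negbTE hh).
    exists (pre h) => //; rewrite inE ha h1 /= Ai.
    have K : zcls z (x:=y') (ends (tgr y) h).1 (ends (tgr y) h).2.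
      by apply: connect1; apply/existsP; exists h; rewrite hb -!surjective_pairing eqxx.
    move: (F (pre h) h1); rewrite h2 => /orP[] /andP [/MY k1 /MY k2].
      by apply: zclsT Ch _; rewrite zclsC.
    apply: zclsT Ch _; apply: zclsT K _; by rewrite zclsC.
Qed.

End Comb.

Section Stab.
Variables (g n : nat).

Lemma wsum_le_card (a : 'I_n -> rat) (S : {set 'I_n}) :
  (forall i, a i <= 1) -> wsum a S <= #|S|%:R.
Proof.
move=> h; rewrite /wsum -sum1_card natr_sum.
by apply: ler_sum => i _; rewrite h.
Qed.

Lemma wsum_ge0 (a : 'I_n -> rat) (S : {set 'I_n}) :
  (forall i, 0 < a i) -> 0 <= wsum a S.
Proof. by move=> h; apply: sumr_ge0 => i _; apply: ltW. Qed.

Lemma wsum_pos (a b : 'I_n -> rat) (S : {set 'I_n}) :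
  (forall i, 0 < b i) -> 0 < wsum a S -> 0 < wsum b S.
Proof.
move=> hb; case: (set_0Vmem S) => [->|[i iS]].
  by rewrite /wsum big_set0 ltxx.
move=> _; rewrite /wsum (bigD1 i) //=.
apply: (@lt_le_trans _ _ (b i)); first exact: hb.
rewrite lerDl; apply: sumr_ge0 => j _; exact: ltW.
Qed.

Lemma key_gt1 (a b : 'I_n -> rat) :
  (forall i, 0 < a i <= 1) -> (forall i, 0 < b i <= 1) ->
  0 < (2 * g)%:R - 2 + \sum_(i < n) b i ->
  chamber_le g a b -> forall S, 1 < wsum a S -> 1 < wsum b S.
Proof.
move=> ha hb htot hch S hS.
have c2 : (2 <= #|S|)%N.
  have := le_lt_trans (lexx 1) (lt_le_trans hS (wsum_le_card S (fun i => (andP (ha i)).2))).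
  by rewrite ltr1n.
have cn : (#|S| <= n)%N by rewrite -[X in (_ <= X)%N]card_ord max_card.
case: (leqP 1 g) => hg.
  by apply: hch => //; rewrite /wall_index hg c2 cn.
have g0 : g = 0%N by lia.
case: (leqP #|S| (n - 2)) => hS2.
  by apply: hch => //; rewrite /wall_index g0 /= c2 hS2.
have cC : (#|~: S| <= 1)%N.
  have := cardsC S; rewrite card_ord; lia.
have hC : wsum b (~: S) <= 1.
  apply: le_trans (wsum_le_card _ (fun i => (andP (hb i)).2)) _.
  by rewrite lern1.
have : \sum_(i < n) b i = wsum b S + wsum b (~: S).
  rewrite /wsum (bigID (mem S)) /=; congr (_ + _); apply: eq_bigl => i.
  by rewrite inE.
move: htot; rewrite g0 muln0 /= => htot hsum; lra.
Qed.

End Stab.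

Section Stab2.
Variables (g n : nat).

Lemma stable_transfer (A B : 'I_n -> rat) (s1 s2 : 'S_n) (G : lgraph n) :
  weight_datum g A -> weight_datum g B ->
  chamber_le g (permute_wt s1 A) (permute_wt s2 B) ->
  stable_graph g A G -> stable_graph g B (relabel (s2^-1 * s1)%g G).
Proof.
move=> [hA tA] [hB tB] hch [hc [hgen hst]].
set a := permute_wt s1 A; set b := permute_wt s2 B.
have ha : forall i, 0 < a i <= 1.
  by move=> i; rewrite /a /permute_wt; case: (hA (s1 i)) => -> ->.
have hb : forall i, 0 < b i <= 1.
  by move=> i; rewrite /b /permute_wt; case: (hB (s2 i)) => -> ->.
have tb : \sum_(i < n) b i = \sum_(i < n) B i.
  by rewrite /b /permute_wt [RHS](reindex_inj (@perm_inj _ s2)).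
have tb' : 0 < (2 * g)%:R - 2 + \sum_(i < n) b i by rewrite tb.
have K1 := key_gt1 ha hb tb' hch.
split => //; split => //.
move=> v; set S := [set i | leg G (s1 i) == v].
have EA : valA A (G:=G) v = wsum a S.
  rewrite /valA /wsum /a /permute_wt (reindex_inj (@perm_inj _ s1)) /=.
  by apply: eq_bigl => i; rewrite inE.
have EB : valA B (G:=relabel (s2^-1 * s1)%g G) v = wsum b S.
  rewrite /valA /wsum /b /permute_wt /= [RHS](reindex_inj (@perm_inj _ s2^-1)).
  by apply: eq_big => i; [rewrite inE permM | rewrite permKV].
move: (hst v); rewrite EA EB /=.
have hb0 : forall i, 0 < b i by move=> i; case/andP: (hb i).
case: (ltnP 2 (2 * wt G v + valE v)) => hk.
  move=> _; have h3 : 3%:R <= (2 * wt G v + valE v)%:R :> rat by rewrite ler_nat.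
  have := wsum_ge0 S hb0; lra.
have : (2 * wt G v + valE v = 2 \/ 2 * wt G v + valE v = 1 \/
        2 * wt G v + valE v = 0)%N by lia.
case=> [-> | [-> | hk0]].
- move=> h; have : 0 < wsum a S by lra.
  move/(wsum_pos (fun i => hb0 i)); lra.
- move=> h; have : 1 < wsum a S by lra.
  move/K1; lra.
have hw : wt G v = 0%N by lia.
have hE : valE v = 0%N by lia.
rewrite hk0 => _.
have noedge : forall e, (ends G e).1 != v /\ (ends G e).2 != v.
  move: hE; rewrite /valE !card_cls => /eqP; rewrite addn_eq0 => /andP [/eqP c1 /eqP c2].
  move=> e; split; apply/negP => he.
    by have := cards0_eq c1; move/setP/(_ e); rewrite !inE he.
  by have := cards0_eq c2; move/setP/(_ e); rewrite !inE he.
have allv : forall u, u = v.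
  move=> u; have := hc.2 v u; move/connectP => [p]; case: p => [|w p] /=.
    by move=> _ ->.
  case/andP => /existsP [e /orP [] /eqP he] _ _.
    by have := (noedge e).1; rewrite he eqxx.
  by have := (noedge e).2; rewrite he eqxx.
have ne0 : ne G = 0%N.
  case: (posnP (ne G)) => // hpos.
  by have := (noedge (Ordinal hpos)).1; rewrite (allv (ends G _).1) eqxx.
have sw : (\sum_(u < nv G) wt G u = 0)%N.
  by apply: big1 => u _; rewrite (allv u).
have g0 : g = 0%N by move: hgen hc.1; rewrite ne0 sw; lia.
have SS : wsum b S = \sum_(i < n) b i.
  by rewrite /wsum; apply: eq_bigl => i; rewrite inE (allv (leg G (s1 i))) eqxx.
move: tb'; rewrite g0 SS /=; lra.
Qed.

End Stab2.

Section Topo.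
Local Open Scope classical_set_scope.
Variables (T : topologicalType) (z : T) (dom : set T).

Lemma nbhs_forall (I : finType) (p : T) (Q : I -> set T) :
  (forall i, nbhs p (Q i)) -> nbhs p [set t | forall i, Q i t].
Proof.
move=> H.
have K : forall s : seq I, nbhs p [set t | forall i, i \in s -> Q i t].
  elim=> [|i s IH].
    by apply: filterS filterT => t _ i; rewrite in_nil.
  apply: filterS (filterI (H i) IH) => t [h1 h2] j; rewrite in_cons.
  by case/orP => [/eqP -> //| hj]; apply: h2.
by apply: filterS (K (enum I)) => t h i; apply: h; rewrite mem_enum.
Qed.

Variables (g n : nat) (A B : 'I_n -> rat) (s : 'S_n).
Hypotheses (domz : dom z) (avoid : forall t, t != z -> nbhs t [set u | u != z])
  (ST : forall G, stable_graph g A G -> stable_graph g B (relabel s G)).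

Lemma moduli_pts x : mpts dom g A x -> mpts dom g B (trelabel s x).
Proof. by case=> h1 h2; split => //; apply: ST. Qed.

Lemma moduli_emb : qembedding (moduli z dom g A) (moduli z dom g B) (@trelabel T n s).
Proof.
split; [|split; [|split; [|split]]].
- exact: moduli_pts.
- by move=> x y _ _ h; apply/trop_relabel.
- by move=> x y _ _ /trop_relabel.
- move=> V [Vsub [Vsat Vcone]]; split; [|split].
  + by move=> x [].
  + move=> x y Px Py hxy [_ hVx]; split => //.
    apply: Vsat hVx; [exact: moduli_pts | exact: moduli_pts | exact/trop_relabel].
  + move=> G hG l hl [hPl hVl].
    have [N [hN hN']] := Vcone (relabel s G) (ST hG) l hl hVl.
    exists N; split => // l' hl' hNl'; split; first by split.
    exact: hN' l' hl' hNl'.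
- move=> U [Usub [Usat Ucone]].
  exists [set y | mpts dom g B y /\ forall x', mpts dom g A x' ->
                  trop_equiv z y (trelabel s x') -> U x'].
  split; last first.
    move=> x hx; split.
      move=> Ux; split; first exact: moduli_pts.
      move=> x' hx' /trop_relabel h; exact: Usat hx hx' h Ux.
    by case=> _ hV; apply: hV hx (trop_refl _ _).
  split; [|split].
  + by move=> y [].
  + move=> y1 y2 P1 P2 h12 [_ hV1]; split => // x' hx' h2.
    exact: hV1 hx' (trop_trans h12 h2).
  + move=> G hG l hl [hPl hVl].
    case: (posnP (ne G)) => hne.
      exists (fun _ => setT); split => [e|l' hl' _].
        by have := ltn_ord e; rewrite {2}hne.
      have -> : l' = l.
        by apply: funext => e; have := ltn_ord e; rewrite {2}hne.
      by split.
    have Claim : forall P : {set 'I_(ne G)}, exists NP : 'I_(ne G) -> set T,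
      (forall e, nbhs (l e) (NP e)) /\
      forall l'', (forall e, dom (l'' e)) -> (forall e, NP e (l'' e)) ->
        (forall e, (l'' e == z) = (e \in P)) -> (forall e, e \in P -> l e = z) ->
        forall x'', mpts dom g A x'' -> trop_equiv z (TRep G l'') (trelabel s x'') ->
        U x''.
      move=> P.
      case: (pselect (exists l0 x0, (forall e, dom (l0 e)) /\
         (forall e, (l0 e == z) = (e \in P)) /\ (forall e, e \in P -> l e = z) /\
         mpts dom g A x0 /\ trop_equiv z (TRep G l0) (trelabel s x0))) => W; last first.
        exists (fun _ => setT); split => [e|]; first exact: filterT.
        move=> l'' hd _ hP hPl' x'' hx'' heq; exfalso; apply: W.
        by exists l'', x''.
      case: W => l0 [x0 [hd0 [hP0 [hPl0 [hx0 heq0]]]]].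
      have [pre Hpre] := trop_mono (x:=TRep G l0) hne heq0.
      have Hl : forall e, l0 e = z -> l e = z.
        by move=> e he; apply: hPl0; rewrite -hP0 he eqxx.
      have E1 := Hpre l Hl.
      set H := tgr x0; set m := tlen x0.
      set m0 := fun h => if tlen (trelabel s x0) h == z then z else l (pre h).
      have hm0 : mpts dom g A (TRep H m0).
        split; first exact: hx0.1.
        by move=> h /=; rewrite /m0; case: (_ == z); [exact: domz | exact: hl].
      have Um0 : U (TRep H m0) := hVl _ hm0 E1.
      have [NH [hNH hNH']] := Ucone H hx0.1 m0 hm0.2 Um0.
      exists (fun e => [set t | forall h, pre h = e -> m h != z -> NH h t]).
      split.
        move=> e; apply: nbhs_forall => h.
        case: (pselect (pre h = e /\ m h != z)) => [[h1 h2]|nh].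
          have e1 : m0 h = l e by rewrite /m0 /= (negbTE h2) h1.
          move: (hNH h); rewrite e1 => hn.
          by apply: filterS hn => t ht _ _.
        by apply: filterS filterT => t _ h1 h2; exfalso; apply: nh.
      move=> l'' hd'' hN hP'' _ x'' hx'' heq''.
      have Hl'' : forall e, l0 e = z -> l'' e = z.
        by move=> e he; apply/eqP; rewrite hP'' -hP0 he eqxx.
      have E2 := Hpre l'' Hl''.
      set m'' := fun h => if tlen (trelabel s x0) h == z then z else l'' (pre h).
      have hm'' : mpts dom g A (TRep H m'').
        split; first exact: hx0.1.
        by move=> h /=; rewrite /m''; case: (_ == z); [exact: domz | exact: hd''].
      have Um'' : U (TRep H m'').
        apply: hNH'; first exact: hm''.2.
        move=> h /=; rewrite /m''; case: ifP => hmh.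
          by have := nbhs_singleton (hNH h); rewrite /m0 /= hmh.
        exact: (hN (pre h) h erefl (negbT hmh)).
      have E3 : trop_equiv z (TRep (relabel s H) m'') (trelabel s x'').
        by apply: trop_trans (trop_sym _ E2) heq''.
      have E4 : trop_equiv z (TRep H m'') x''.
        exact: (iffLR (trop_relabel z s (TRep H m'') x'') E3).
      exact: Usat hm'' hx'' E4 Um''.
    have [NP HNP] := choice Claim.
    exists (fun e => [set t | (l e != z -> t != z) /\ forall P, NP P e t]).
    split.
      move=> e; apply: filterI.
        case: (boolP (l e != z)) => he.
          by apply: filterS (avoid he) => t ht _.
        by apply: filterS filterT => t _ h; case/negP: he.
      by apply: nbhs_forall => P; exact: (HNP P).1.
    move=> l' hl' hN; split; first by split.
    move=> x'' hx'' heq.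
    apply: ((HNP [set e | l' e == z]%SET).2 l' hl' _ _ _ x'' hx'' heq).
    - by move=> e; case: (hN e).
    - by move=> e; rewrite inE.
    - move=> e; rewrite inE => /eqP he; apply/eqP; apply/negPn/negP => hle.
      by have := (hN e).1 hle; rewrite he eqxx.
Qed.

End Topo.

Section Final.
Local Open Scope classical_set_scope.

Lemma avoid_haus (T : topologicalType) : hausdorff_space T ->
  forall z t : T, t != z -> nbhs t [set u | u != z].
Proof.
move=> hT z t htz; have [A [oA tA zA]] := hausdorff_accessible hT htz.
rewrite in_setE in tA; rewrite in_setE in zA.
apply: (filterS _ (open_nbhs_nbhs (conj oA tA))) => u Au.
by apply/eqP => uz; rewrite uz in Au; exact: zA Au.
Qed.

Lemma delta_emb (R : realType) (g n : nat) (A B : 'I_n -> rat) (s : 'S_n) :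
  (forall G, stable_graph g A G -> stable_graph g B (relabel s G)) ->
  qembedding (Delta_trop R g A) (Delta_trop R g B) (@trelabel R n s).
Proof.
move=> ST.
have M : qembedding (Mtrop R g A) (Mtrop R g B) (@trelabel R n s).
  apply: moduli_emb; [exact: lexx | exact: avoid_haus (@Rhausdorff R) 0 | exact: ST].
case: M => [M1 [M2 [M3 [M4 M5]]]].
split; [|split; [|split; [|split]]].
- by move=> x [hx h1]; split => //; apply: M1.
- by move=> x y [hx _] [hy _]; apply: M2.
- by move=> x y [hx _] [hy _]; apply: M3.
- move=> W [V' [hV' ->]].
  exists [set x | qpts (Mtrop R g A) x /\ V' (trelabel s x)]; split.
    exact: M4.
  apply/seteqP; split => x /=.
    by case=> [[hx h1] [hV _]]; split.
  by case=> [[hx hV] h1]; split; split.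
- move=> U [V [hV ->]].
  have [V' [hV' HV']] := M5 V hV.
  exists (V' `&` [set x | total_length x = 1]); split.
    by exists V'.
  move=> x [hx h1]; split.
    by case=> hVx _; split => //; apply/(HV' x hx).
  by case=> hV'x _; split => //; apply/(HV' x hx).
Qed.

End Final.

Theorem mainTheorem1 (R : realType) (g n : nat) (N : nat)
    (As : nat -> ('I_n -> rat)) :
  (1 <= n)%N ->
  (forall p, (p < N)%N -> weight_datum g (As p) /\ in_chamber g (As p)) ->
  (forall p, (p.+1 < N)%N -> sym_chamber_le g (As p) (As p.+1)) ->
  forall p, (p.+1 < N)%N ->
    exists s : 'S_n,
      qembedding (Mtrop R g (As p)) (Mtrop R g (As p.+1)) (@trelabel R n s) /\
      qembedding (Mtrop_bar R g (As p)) (Mtrop_bar R g (As p.+1))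
                 (@trelabel (\bar R) n s) /\
      qembedding (Delta_trop R g (As p)) (Delta_trop R g (As p.+1))
                 (@trelabel R n s).
Proof.
move=> _ hW hC p hp.
have [wA _] := hW p (ltnW hp).
have [wB _] := hW p.+1 hp.
have [s1 [s2 hch]] := hC p hp.
have ST := fun G => @stable_transfer g n _ _ s1 s2 G wA wB hch.
exists (s2^-1 * s1)%g; split; [|split].
- apply: moduli_emb; [exact: lexx | exact: avoid_haus (@Rhausdorff R) 0 | exact: ST].
- apply: moduli_emb; [exact: lexx | exact: avoid_haus (@ereal_hausdorff R) 0%E | exact: ST].
- exact: delta_emb.
Qed.
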